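(* Let $\mathcal{P}$ be a finite set of passwords, let $R_1,\dots,R_m\subseteq\mathcal{P}$ be positive rules, and let $\ell$ be a ranking (total order) of $\mathcal{P}$. For $S\subseteq[m]$ let $\mathcal{A}_S=\bigcup_{i\in S}R_i$, and let $\ell(\mathcal{A}_S)$ denote the $\ell$-most-preferred password in $\mathcal{A}_S$ (if $\mathcal{A}_S\neq\emptyset$). Consider the procedure Reduce: set $S_0=[m]$, $i=0$, and $\hat\ell$ the empty list; while $S_i\neq\emptyset$, let $w=\ell(\mathcal{A}_{S_i})$, append $w$ to $\hat\ell$, set $S_{i+1}=S_i\setminus\{j : w\in R_j\}$ and increase $i$ by one; finally output $\hat\ell$. Then Reduce makes at most $m$ queries of the form $\ell(\mathcal{A}_{S})$ and at most $m^2$ membership queries (''is $w\in R_j$?''), and outputs a list $\hat\ell$ of at most $m$ passwords such that for every $S\subseteq[m]$ (with $\mathcal{A}_S\neq\emptyset$) the first password of $\hat\ell$ lying in $\mathcal{A}_S$ equals $\ell(\mathcal{A}_S)$.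
   Context: A ranking of $\mathcal{P}$ represents a user's preferences: the user prefers earlier passwords. Under a password policy $\mathcal{A}\subseteq\mathcal{P}$ a user picks the most preferred password in $\mathcal{A}$. In the positive rules setting, the policy determined by a set $S\subseteq[m]$ of active rules is $\mathcal{A}_S=\bigcup_{i\in S}R_i$. *)

(* Defs.v *)
From mathcomp Require Import all_boot.
Set Implicit Arguments. Unset Strict Implicit. Unset Printing Implicit Defensive.

(* A ranking of the finite password set P is a duplicate-free list l
   containing every password; earlier = more preferred. *)
Definition is_ranking (P : finType) (l : seq P) : Prop :=
  uniq l /\ forall x : P, x \in l.

Definition best (P : finType) (l : seq P) (A : {set P}) : option P :=
  ohead [seq x <- l | x \in A].

Definition policy (P : finType) (m : nat) (R : 'I_m -> {set P})
  (S : {set 'I_m}) : {set P} := \bigcup_(i in S) R i.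

(* Returns
   (output list, number of l(A_S) queries, number of membership queries).
   Each iteration issues one query l(A_{S_i}) and, to compute
   S_{i+1} = S_i \ {j : w in R_j}, one membership query "w in R_j?" for each
   j in S_i.  If A_{S_i} is empty (possible only if some rules are empty)
   the query returns nothing and the procedure stops. *)
Fixpoint reduce_loop (P : finType) (m : nat) (R : 'I_m -> {set P})
  (l : seq P) (fuel : nat) (S : {set 'I_m}) : seq P * nat * nat :=
  match fuel with
  | 0 => ([::], 0, 0)
  | fuel'.+1 =>
    if S == set0 then ([::], 0, 0) else
    match best l (policy R S) with
    | None => ([::], 1, 0)
    | Some w =>
      let S' := [set j in S | w \notin R j] in
      let r := reduce_loop R l fuel' S' in
      (w :: r.1.1, r.1.2.+1, r.2 + #|S|)
    end
  end.

(* Reduce: start from S_0 = [m]; fuel m.+1 is more than enough since each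
   iteration removes at least one index. *)
Definition Reduce (P : finType) (m : nat) (R : 'I_m -> {set P}) (l : seq P)
  : seq P * nat * nat := reduce_loop R l m.+1 [set: 'I_m].

(* Main.v *)
Require Import Defs.
From mathcomp Require Import all_boot.
From mathcomp Require Import zify.
Set Implicit Arguments. Unset Strict Implicit.

Lemma best_sub (P : finType) (l : seq P) (A B : {set P}) w :
  B \subset A -> best l A = Some w -> w \in B -> best l B = Some w.
Proof.
move=> sBA; elim: l => [|x l IH] //=.
rewrite /best /=; case: ifP => xA /=.
  by case=> <- xB; rewrite xB.
move=> H wB; have xB : x \in B = false.
  by apply/negbTE/negP => /(subsetP sBA); rewrite xA.
by rewrite xB; apply: IH.
Qed.

Lemma best_mem (P : finType) (l : seq P) (A : {set P}) w :
  best l A = Some w -> w \in A.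
Proof.
elim: l => [|x l IH] //; rewrite /best /=; case: ifP => xA //=; by [case=> <-|].
Qed.

Lemma best_None (P : finType) (l : seq P) (A : {set P}) w :
  w \in l -> w \in A -> best l A <> None.
Proof.
elim: l => [|x l IH] //; rewrite /best /= inE; case: ifP => xA //=.
case/orP => [/eqP ->|]; first by rewrite xA.
by move=> wl wA; apply: IH.
Qed.

Lemma policy_sub (P : finType) (m : nat) (R : 'I_m -> {set P}) (T S : {set 'I_m}) :
  T \subset S -> policy R T \subset policy R S.
Proof.
move=> sTS; apply/subsetP => x /bigcupP [j jT xj].
by apply/bigcupP; exists j => //; apply: (subsetP sTS).
Qed.

Lemma loop_inv (P : finType) (m : nat) (R : 'I_m -> {set P}) (l : seq P)
  (Hl : forall x, x \in l) fuel (S : {set 'I_m}) :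
  #|S| < fuel ->
  let r := reduce_loop R l fuel S in
  r.1.2 <= #|S| /\ r.2 <= #|S| * #|S| /\ size r.1.1 <= #|S| /\
  forall T : {set 'I_m}, T \subset S -> policy R T != set0 ->
    best r.1.1 (policy R T) = best l (policy R T).
Proof.
elim: fuel S => [|f IH] S //= Hf.
case: eqP => [S0|/eqP Sn0].
  split=> //; split=> //; split=> //.
  move=> T; rewrite S0 subset0 => /eqP ->; rewrite /policy big_set0 eqxx //.
have S0 : 0 < #|S| by rewrite card_gt0.
case Eb: (best l (policy R S)) => [w|] /=; last first.
  split=> //; split=> //; split=> //.
  move=> T sTS /set0Pn [x xT]; exfalso.
  apply: (best_None (Hl x) _ Eb); exact: (subsetP (policy_sub R sTS)).
set S' := [set j in S | w \notin R j].
have wS := best_mem Eb.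
have ltS : #|S'| < #|S|.
  apply: proper_card; rewrite properE; apply/andP; split.
    by apply/subsetP => j; rewrite inE => /andP[].
  case/bigcupP: wS => j jS wj; apply/negP => /subsetP /(_ j jS).
  by rewrite inE jS wj.
have [h1 [h2 [h3 h4]]] := IH S' (leq_trans ltS Hf).
split; first exact: leq_ltn_trans h1 ltS. split.
  have e1 : #|S'| * #|S'| <= #|S|.-1 * #|S|.-1 by apply: leq_mul; lia.
  have e2 : #|S|.-1 * #|S|.-1 + #|S| <= #|S| * #|S| by case: #|S| S0 => // n _; rewrite /= mulSn mulnS; lia.
  apply: leq_trans e2; rewrite leq_add2r; exact: leq_trans h2 e1.
split; first exact: leq_ltn_trans h3 ltS.
move=> T sTS T0.
case wT: (w \in policy R T).
  rewrite /best /= wT /=; symmetry.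
  exact: (best_sub (policy_sub R sTS) Eb wT).
rewrite /best /= wT /= -/(best _ _); apply: h4 => //.
apply/subsetP => j jT; rewrite inE (subsetP sTS _ jT) /=.
apply/negP => wj; move/negbT: wT => /negP; apply; apply/bigcupP; by exists j.
Qed.

Theorem claim3p1 (P : finType) (m : nat) (R : 'I_m -> {set P}) (l : seq P)
  (Hl : is_ranking l) :
  let out := Reduce R l in
  out.1.2 <= m /\ out.2 <= m ^ 2 /\ size out.1.1 <= m /\
  (forall S : {set 'I_m}, policy R S != set0 ->
     best out.1.1 (policy R S) = best l (policy R S)).
Proof.
case: Hl => _ Hl.
have := @loop_inv P m R l Hl m.+1 [set: 'I_m].
rewrite cardsT card_ord => /(_ (ltnSn m)) [h1 [h2 [h3 h4]]].
rewrite /Reduce; split=> //; split; first by rewrite expnS expn1.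
split=> // S; apply: h4; exact: subsetT.
Qed.
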